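(* Suppose $r\neq0$ and $r+s=0$. Then the Leonard pair $L,L^*+\frac{r-d}{2}$ on $\mathcal P_d(\mathbb R)$ is dual almost bipartite.
   Context: Fix an integer $d\ge0$ and $r,s\in(-1,\infty)$. Write $(x)_i=x(x+1)\cdots(x+i-1)$, $(x)_0=1$. For $0\le i\le d$ put $\theta_i=(d-i)(d-i+r+s+1)$ (distinct) and $\theta^*_i=i$. Put $b^*_i=\frac{(d-i)(i-d-s)(2d-2i+r+s+2)_i}{(2d-2i+r+s)_{i+1}}$ ($0\le i\le d-1$), $c^*_i=\frac{i(i-d-r-1)(d-i+r+s+1)_{d-i}}{(d-i+r+s+2)_{d-i+1}}$ ($1\le i\le d$), $b^*_d=c^*_0=0$, and $a^*_i=\theta^*_0-b^*_i-c^*_i$. Let $\mathcal P_d(\mathbb R)$ be the real polynomials of degree at most $d$, each determined by its values at $\theta_0,\dots,\theta_d$. Let $L,L^*$ be the linear maps on $\mathcal P_d(\mathbb R)$ with $(Lf)(\theta_i)=\theta_i f(\theta_i)$ and $(L^*f)(\theta_i)=b^*_i f(\theta_{i+1})+a^*_i f(\theta_i)+c^*_i f(\theta_{i-1})$ ($0\le i\le d$; terms with coefficient $b^*_d$ or $c^*_0$ omitted); a scalar stands for that scalar times the identity. A square matrix is irreducible tridiagonal if its nonzero entries lie on the diagonal, subdiagonal or superdiagonal and all subdiagonal and superdiagonal entries are nonzero. A Leonard pair on a nonzero finite-dimensional vector space $V$ is an ordered pair $A,A^*$ of linear maps on $V$ such that there is an ordered basis in which $A$ is diagonal and $A^*$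 is irreducible tridiagonal, and there is an ordered basis in which $A^*$ is diagonal and $A$ is irreducible tridiagonal. A Leonard pair $A,A^*$ on $V$ is almost bipartite if there is an ordered basis of $V$ in which $A^*$ is diagonal and $A$ is irreducible tridiagonal with all diagonal entries except the last one equal to zero; it is dual almost bipartite if $A^*,A$ is almost bipartite, i.e. there is an ordered basis in which $A$ is diagonal and $A^*$ is irreducible tridiagonal with all diagonal entries except the last one equal to zero. *)

(* Defs.v *)
From HB Require Import structures.
From mathcomp Require Import all_boot all_order all_algebra.
Set Implicit Arguments. Unset Strict Implicit. Unset Printing Implicit Defensive.
Import Order.TTheory GRing.Theory Num.Theory.
Local Open Scope ring_scope.

Section LP.
Variables (K : fieldType) (V : vectType K).

Definition mat_of n (e : n.-tuple V) (A : 'End(V)) : 'M[K]_n :=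
  \matrix_(i < n, j < n) coord e i (A e`_j).

Definition is_diagonal n (M : 'M[K]_n) : Prop :=
  forall i j : 'I_n, i != j -> M i j = 0.

Definition irred_tridiag n (M : 'M[K]_n) : Prop :=
  (forall i j : 'I_n, ((i : nat).+1 < j)%N \/ ((j : nat).+1 < i)%N -> M i j = 0)
  /\ (forall i j : 'I_n, (i : nat).+1 = j -> M i j != 0 /\ M j i != 0).

Definition LeonardPair (A As : 'End(V)) : Prop :=
  (0 < \dim {:V})%N /\
  (exists n (e : n.-tuple V), basis_of fullv e /\
      is_diagonal (mat_of e A) /\ irred_tridiag (mat_of e As)) /\
  (exists n (e : n.-tuple V), basis_of fullv e /\
      is_diagonal (mat_of e As) /\ irred_tridiag (mat_of e A)).

Definition almost_bipartite (A As : 'End(V)) : Prop :=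
  LeonardPair A As /\
  exists n (e : n.-tuple V), basis_of fullv e /\
    is_diagonal (mat_of e As) /\ irred_tridiag (mat_of e A) /\
    (forall i : 'I_n, ((i : nat).+1 < n)%N -> mat_of e A i i = 0).

Definition dual_almost_bipartite (A As : 'End(V)) : Prop :=
  almost_bipartite As A.

End LP.

Section Data.
Variable R : realFieldType.

Definition poch (x : R) (i : nat) : R := \prod_(k < i) (x + k%:R).

Variables (d : nat) (r s : R).

Definition theta (i : nat) : R := (d - i)%:R * ((d - i)%:R + r + s + 1).
Definition thetas (i : nat) : R := i%:R.

Definition bs (i : nat) : R :=
  if (i < d)%N then
    (d - i)%:R * (i%:R - d%:R - s) * poch (2 * (d - i)%:R + r + s + 2) i
      / poch (2 * (d - i)%:R + r + s) i.+1
  else 0.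

Definition cs (i : nat) : R :=
  if (0 < i)%N && (i <= d)%N then
    i%:R * (i%:R - d%:R - r - 1) * poch ((d - i)%:R + r + s + 1) (d - i)
      / poch ((d - i)%:R + r + s + 2) (d - i).+1
  else 0.

Definition as_ (i : nat) : R := thetas 0 - bs i - cs i.

End Data.

(* Main.v *)
Require Import Defs.
From HB Require Import structures.
From mathcomp Require Import all_boot all_order all_algebra.
From mathcomp Require Import ring lra zify.
Import Order.TTheory GRing.Theory Num.Theory.
Local Open Scope ring_scope.
Set Implicit Arguments. Unset Strict Implicit. Unset Printing Implicit Defensive.

Section Scal.
Variables (R : realFieldType) (d : nat) (r : R).
Hypothesis hr1 : -1 < r.
Hypothesis hr2 : r < 1.

Definition G (k : nat) (y : R) : R := \prod_(l < k) ((y - l%:R) * (y + l%:R + 1)).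

Lemma GS k y : G k.+1 y = G k y * ((y - k%:R) * (y + k%:R + 1)).
Proof. by rewrite /G big_ord_recr. Qed.

Lemma G0 y : G 0 y = 1.
Proof. by rewrite /G big_ord0. Qed.

Lemma Gup k y : G k.+1 (y + 1) = G k y * ((y + k%:R + 1) * (y + k%:R + 2)).
Proof.
elim: k => [|k IH]; first by rewrite GS !G0; ring.
rewrite GS IH GS -!natr1; ring.
Qed.

Lemma Gdown k y : G k.+1 (y - 1) = G k y * ((y - k%:R) * (y - k%:R - 1)).
Proof.
elim: k => [|k IH]; first by rewrite GS !G0; ring.
rewrite GS IH GS -!natr1; ring.
Qed.

Definition Bf (y : R) := (r - y) * (d%:R + y + 1) / (2 * (2 * y + 1)).
Definition Cf (y : R) := - ((d%:R - y) * (y + r + 1)) / (2 * (2 * y + 1)).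
Definition Dk (k : nat) := (r + 1 + k%:R) * (k%:R - d%:R) * (k%:R + 1).

Lemma key_Ls k y : 0 <= y ->
  Bf y * (G k.+1 (y - 1) - G k.+1 y) + Cf y * (G k.+1 (y + 1) - G k.+1 y)
  = k.+1%:R * G k.+1 y + Dk k * G k y.
Proof.
move=> y0; have h : 2 * (2 * y + 1) != 0 by apply: lt0r_neq0; lra.
rewrite Gdown Gup GS /Bf /Cf /Dk -natr1.
field; apply: lt0r_neq0; lra.
Qed.

Lemma Dk_neq0 k : (k < d)%N -> Dk k != 0.
Proof.
move=> kd.
rewrite /Dk !mulf_neq0 //; try (apply: lt0r_neq0; have := hr1; have := ler0n R k; lra).
by rewrite subr_eq0 eqr_nat neq_ltn kd.
Qed.

Definition al (j k : nat) : R := \prod_(l < k) ((j%:R - l%:R) / Dk l).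

Lemma alS j k : al j k.+1 = al j k * ((j%:R - k%:R) / Dk k).
Proof. by rewrite /al big_ord_recr. Qed.

Lemma al0 j : al j 0 = 1.
Proof. by rewrite /al big_ord0. Qed.

Lemma al_zero j k : (j < k)%N -> al j k = 0.
Proof.
move=> jk; rewrite /al (bigD1 (Ordinal jk)) //= subrr mul0r mul0r //.
Qed.

Lemma al_diag k : (k <= d)%N -> al k k != 0.
Proof.
move=> kd; rewrite /al; apply/prodf_neq0 => l _.
rewrite mulf_neq0 ?invr_eq0 ?Dk_neq0 //; last exact: leq_trans (ltn_ord l) kd.
by rewrite subr_eq0 eqr_nat neq_ltn ltn_ord orbT.
Qed.

Lemma A1 j k : (k < d)%N -> al j.+1 k.+1 = j.+1%:R * al j k / Dk k.
Proof.
elim: k => [|k IH] kd.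
  by rewrite alS !al0 subr0 mul1r mulr1.
rewrite alS IH ?(ltnW kd) // alS.
have h1 := Dk_neq0 (ltnW kd).
rewrite -!natr1; field; by rewrite h1 Dk_neq0.
Qed.

Lemma A2 j m : j.+1%:R * al j m = al j.+1 m * (j.+1%:R - m%:R).
Proof.
elim: m => [|m IH]; first by rewrite !al0 subr0 mulr1 mul1r.
rewrite !alS mulrA IH -!natr1; ring.
Qed.

Definition bj (j : nat) := (j%:R + r + 1) * (j%:R - d%:R).
Definition cpj (j : nat) := j%:R + r - d%:R - 1.
Definition cj (j : nat) := j%:R * cpj j.
Definition aj (j : nat) := - bj j - cj j.

Lemma key_L j k : (k < d)%N ->
  al j k + al j k.+1 * (k.+1%:R * k.+2%:R)
  = bj j * al j.+1 k.+1 + aj j * al j k.+1 + cj j * al j.-1 k.+1.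
Proof.
move=> kd.
have hc : cj j * al j.-1 k.+1 = cpj j * (al j k.+1 * (j%:R - k.+1%:R)).
  case: j => [|j]; first by rewrite /cj mul0r mul0r al_zero // mul0r mulr0.
  by rewrite /= /cj -A2; ring.
rewrite hc A1 // alS.
have h1 := Dk_neq0 kd.
rewrite /aj /cj /bj /cpj /Dk -!natr1; field.
by move: h1; rewrite /Dk !mulf_eq0 !negb_or => /andP[/andP[-> ->] ->].
Qed.

End Scal.

Section Poch.
Variable R : realFieldType.

Lemma pochS (x : R) n : poch x n.+1 = poch x n * (x + n%:R).
Proof. by rewrite /poch big_ord_recr. Qed.

Lemma pochSl (x : R) n : poch x n.+1 = x * poch (x + 1) n.
Proof.
rewrite /poch big_ord_recl addr0; congr (_ * _); apply: eq_bigr => i _.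
rewrite lift0 -natr1; ring.
Qed.

Lemma poch_gt0 (x : R) n : 0 < x -> 0 < poch x n.
Proof.
move=> x0; rewrite /poch; apply: prodr_gt0 => i _.
have := ler0n R i; move: x0; lra.
Qed.

Lemma poch2 (x : R) n : poch x n.+2 = x * (x + 1) * poch (x + 2) n.
Proof.
rewrite pochSl pochSl mulrA.
have -> : x + 1 + 1 = x + 2 by ring.
by [].
Qed.
End Poch.

Section Conn.
Variables (R : realFieldType) (d : nat) (r s : R).
Hypothesis hrs : r + s = 0.

Lemma sE : s = - r.
Proof. by apply/eqP; rewrite -addr_eq0 addrC hrs. Qed.

Lemma thetaE t : theta d r s t = (d - t)%:R * ((d - t)%:R + 1).
Proof. by rewrite /theta -(addrA _ r s) hrs addr0. Qed.

Lemma bsE i : (i < d)%N -> bs d r s i = Bf d r (d - i)%:R.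
Proof.
move=> id; rewrite /bs id.
have y1 : 1 <= (d - i)%:R :> R by rewrite ler1n subn_gt0.
have iE : i%:R = d%:R - (d - i)%:R :> R by rewrite natrB ?(ltnW id) //; ring.
move: ((d - i)%:R) y1 iE => y y1 iE.
have hx : 0 < 2 * y + r + s by have := hrs; lra.
have e := poch2 (2 * y + r + s) i.
rewrite pochS in e.
have hp : poch (2 * y + r + s) i.+1 != 0 by apply: lt0r_neq0; apply: poch_gt0.
have E : poch (2 * y + r + s + 2) i = poch (2 * y + r + s) i.+1 * (2 * y + r + s + i.+1%:R)
     / ((2 * y + r + s) * (2 * y + r + s + 1)).
  rewrite e; field; apply/andP; split; apply: lt0r_neq0; lra.
have i1 : i.+1%:R = d%:R - y + 1 :> R by rewrite -natr1 iE.
rewrite E i1 iE sE /Bf; rewrite sE in hp.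
field; rewrite hp /=; apply/andP; split; apply: lt0r_neq0; lra.
Qed.

Lemma csE i : (0 < i)%N -> (i <= d)%N -> cs d r s i = Cf d r (d - i)%:R.
Proof.
move=> i0 hid; rewrite /cs i0 hid /=.
have iE : i%:R = d%:R - (d - i)%:R :> R by rewrite natrB ?hid //; ring.
rewrite iE.
move: (d - i)%N => n.
have y0 : 0 <= n%:R :> R by [].
set x := n%:R + r + s.
have hx : x = n%:R by rewrite /x -addrA hrs addr0.
have e2 : x + 1 + 1 = x + 2 by ring.
have e1 : poch (x + 1) n * (x + 1 + n%:R) * (x + 1 + n.+1%:R) = (x + 1) * poch (x + 2) n.+1.
  by rewrite -pochS -pochS pochSl e2.
have hp : poch (x + 1) n != 0 by apply: lt0r_neq0; apply: poch_gt0; rewrite hx; lra.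
have E : poch (x + 2) n.+1 = poch (x + 1) n * (x + 1 + n%:R) * (x + 1 + n.+1%:R) / (x + 1).
  rewrite e1; field; apply: lt0r_neq0; rewrite hx; lra.
rewrite E -natr1 hx /Cf.
rewrite hx in hp.
field; rewrite hp andbT; apply/and3P; split; apply: lt0r_neq0; lra.
Qed.

Lemma Gk0 k : k%:R * G k 0 = 0 :> R.
Proof. by case: k => [|k]; rewrite ?mul0r // /G big_ord_recl subrr mul0r mul0r mulr0. Qed.

Lemma node_Ls (i k : nat) : (i <= d)%N ->
  bs d r s i * G k.+1 (d - i.+1)%:R + as_ d r s i * G k.+1 (d - i)%:R
  + cs d r s i * G k.+1 (d - i.-1)%:R
  = k.+1%:R * G k.+1 (d - i)%:R + Dk d r k * G k (d - i)%:R.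
Proof.
move=> hid.
have -> : as_ d r s i = - bs d r s i - cs d r s i by rewrite /as_ /thetas sub0r.
have E : forall a b c, bs d r s i * a + (- bs d r s i - cs d r s i) * b + cs d r s i * c
   = bs d r s i * (a - b) + cs d r s i * (c - b) by move=> a b c; ring.
rewrite E {E}.
have [lt_id|eq_id] : (i < d)%N \/ i = d by lia.
- rewrite bsE //.
  have h1 : (d - i.+1)%:R = (d - i)%:R - 1 :> R.
    have e1 : (d - i)%N = (d - i.+1).+1 by lia.
    by rewrite e1 -natr1 addrK.
  have y0 : 0 <= (d - i)%:R :> R by [].
  rewrite h1 -(key_Ls _ _ _ y0); congr (_ + _).
  clear y0 h1; case: i lt_id hid => [|i] lt_id hid.
    by rewrite /cs /= /Cf subn0 !(subrr, mul0r, oppr0).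
  rewrite csE ?(ltnW lt_id) //.
  have h2 : (d - i.+1.-1)%:R = (d - i.+1)%:R + 1 :> R.
    have e1 : (d - i)%N = (d - i.+1).+1 by lia.
    by rewrite /= e1 -natr1.
  by rewrite h2.
- subst i; rewrite subnn subnS subnn /= {1}/bs ltnn mul0r add0r.
  have y0 : 0 <= 0 :> R by [].
  have hz : Bf d r 0 * (G k.+1 (0 - 1) - G k.+1 0) = 0.
    rewrite Gdown GS.
    transitivity (Bf d r 0 * 2 * (k%:R * G k 0) * (k%:R + 1)); first ring.
    by rewrite Gk0 !(mulr0, mul0r).
  have := key_Ls d r k y0; rewrite hz add0r => <-.
  have [d0|dpos] : d = 0%N \/ (0 < d)%N by lia.
    by rewrite d0 /cs /= /Cf !(subrr, mul0r, oppr0).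
  rewrite csE //.
  have -> : (d - d.-1)%N = 1%N by lia.
  by rewrite add0r subnn.
Qed.
End Conn.

Lemma size_prodX (R : fieldType) (f : nat -> R) k :
  size (\prod_(l < k) ('X - (f l)%:P)) = k.+1.
Proof.
elim: k => [|k IH]; first by rewrite big_ord0 size_poly1.
rewrite big_ord_recr /= size_Mmonic ?monicXsubC ?IH ?size_XsubC //.
- by rewrite /= addnS addn1.
- by apply: monic_neq0; apply: monic_prod_XsubC.
Qed.


Section Main.
Variables (R : realFieldType) (d : nat) (r s : R).
Hypothesis hr : -1 < r.
Hypothesis hs : -1 < s.
Hypothesis hrs : r + s = 0.

Lemma hr2 : r < 1.
Proof. have := sE hrs; have := hs; move=> h1 h2; rewrite h2 in h1; lra. Qed.

Definition xs (i : nat) : R := if (i <= d)%N then theta d r s i else - (i%:R).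

Lemma theta_ge0 t : 0 <= theta d r s t.
Proof. rewrite (thetaE d hrs); apply: mulr_ge0; have := ler0n R (d - t); lra. Qed.

Lemma theta_inj i j : (i <= d)%N -> (j <= d)%N -> theta d r s i = theta d r s j -> i = j.
Proof.
move=> hi hj; rewrite !(thetaE d hrs).
move=> e.
have : ((d - i)%:R - (d - j)%:R) * ((d - i)%:R + (d - j)%:R + 1) = 0 :> R.
  by rewrite -[LHS]/(_ : R); transitivity ((d - i)%:R * ((d - i)%:R + 1) - (d - j)%:R * ((d - j)%:R + 1) : R); [ring | rewrite e subrr].
move/eqP; rewrite mulf_eq0 => /orP[|].
  by rewrite subr_eq0 eqr_nat => /eqP; lia.
move=> h; exfalso; move: h; rewrite gt_eqF //.
have := ler0n R (d - i); have := ler0n R (d - j); lra.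
Qed.

Lemma xs_inj : injective xs.
Proof.
move=> i j; rewrite /xs.
case: (leqP i d) => hi; case: (leqP j d) => hj.
- exact: theta_inj.
- move=> e; exfalso; have := theta_ge0 i; rewrite e; have := ler0n R j.
  have : (0 < j)%N by lia. rewrite -(ltr0n R) => ? ? ?; lra.
- move=> e; exfalso; have := theta_ge0 j; rewrite -e; have := ler0n R i.
  have : (0 < i)%N by lia. rewrite -(ltr0n R) => ? ? ?; lra.
- by move/eqP; rewrite eqr_opp eqr_nat => /eqP.
Qed.

Lemma xsE (i : nat) : (i <= d)%N -> xs i = theta d r s i.
Proof. by rewrite /xs => ->. Qed.

Local Notation V := {poly_d.+1 R}.
Definition lag : (d.+1).-tuple V := lagrange d.+1 xs.

Lemma lag_full : basis_of fullv lag.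
Proof. exact: lagrange_full xs_inj. Qed.

Lemma lag_coord (p : V) (i : 'I_d.+1) : coord lag i p = (p : {poly R}).[theta d r s i].
Proof. rewrite (lagrange_coords _ xs_inj) // xsE //; by rewrite -ltnS. Qed.

Lemma ext (p q : V) :
  (forall i : 'I_d.+1, (p : {poly R}).[theta d r s i] = (q : {poly R}).[theta d r s i]) -> p = q.
Proof.
move=> H.
rewrite (coord_basis lag_full (memvf p)) (coord_basis lag_full (memvf q)).
by apply: eq_bigr => i _; rewrite !lag_coord H.
Qed.


Definition Np k : {poly R} := \prod_(l < k) ('X - (l%:R * (l%:R + 1))%:P).

Lemma size_Np k : size (Np k) = k.+1.
Proof. exact: (size_prodX (fun l : nat => (l%:R * (l%:R + 1) : R)) k). Qed.

Lemma Np_theta k t : (Np k).[theta d r s t] = G k (d - t)%:R.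
Proof.
rewrite horner_prod (thetaE d hrs) /G; apply: eq_bigr => l _; rewrite hornerXsubC; ring.
Qed.

Definition up j : {poly R} := \sum_(k < d.+1) al d r j k *: Np k.

Lemma size_up j : (size (up j) <= d.+1)%N.
Proof.
rewrite /up; apply: (leq_trans (size_sum _ _ _)); apply/bigmax_leqP => k _.
apply: (leq_trans (size_scale_leq _ _)); by rewrite size_Np.
Qed.

Definition uv j : V := npolyp d.+1 (up j).

Lemma uvE j : (uv j : {poly R}) = up j.
Proof. exact: npolypK (size_up j). Qed.

Lemma uv_theta j t : (uv j : {poly R}).[theta d r s t] = \sum_(k < d.+1) al d r j k * G k (d - t)%:R.
Proof. by rewrite uvE /up horner_sum; apply: eq_bigr => k _; rewrite hornerZ Np_theta. Qed.

Lemma G_vanish k m : (m < k)%N -> G k m%:R = 0 :> R.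
Proof. by move=> mk; rewrite /G (bigD1 (Ordinal mk)) //= subrr mul0r mul0r. Qed.


Variables (L Ls : 'End({poly_d.+1 R})).
Hypothesis HL : forall (f : {poly_d.+1 R}) (i : 'I_d.+1),
      (L f : {poly R}).[theta d r s i] = theta d r s i * (f : {poly R}).[theta d r s i].
Hypothesis HLs : forall (f : {poly_d.+1 R}) (i : 'I_d.+1),
      (Ls f : {poly R}).[theta d r s i] =
        bs d r s i * (f : {poly R}).[theta d r s i.+1]
        + as_ d r s i * (f : {poly R}).[theta d r s i]
        + cs d r s i * (f : {poly R}).[theta d r s i.-1].

Lemma polynD (p q : {poly_d.+1 R}) : ((p + q : {poly_d.+1 R}) : {poly R}) = p + q.
Proof. by []. Qed.
Lemma polynZ a (p : {poly_d.+1 R}) : ((a *: p : {poly_d.+1 R}) : {poly R}) = a *: (p : {poly R}).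
Proof. by []. Qed.

Lemma ev3 a b c (p q w : {poly_d.+1 R}) x :
  ((a *: p + b *: q + c *: w : {poly_d.+1 R}) : {poly R}).[x]
  = a * (p : {poly R}).[x] + b * (q : {poly R}).[x] + c * (w : {poly R}).[x].
Proof. have -> : ((a *: p + b *: q + c *: w : {poly_d.+1 R}) : {poly R}) = a *: (p : {poly R}) + b *: (q : {poly R}) + c *: (w : {poly R}) by []. by rewrite !hornerE. Qed.

Lemma Lu j : L (uv j) = bj d r j *: uv j.+1 + aj d r j *: uv j + cj d r j *: uv j.-1.
Proof.
apply: ext => i; rewrite HL; symmetry; etransitivity; first exact: ev3.
rewrite !uv_theta.
rewrite (thetaE d hrs).
have hi : (d - i < d.+1)%N by lia.
move: (d - i)%N hi => m hm.
transitivity (\sum_(k < d.+1) (bj d r j * al d r j.+1 k + aj d r j * al d r j k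
     + cj d r j * al d r j.-1 k) * G k m%:R).
  rewrite !mulr_sumr -!big_split /=; apply: eq_bigr => k _; ring.
symmetry.
transitivity (\sum_(k < d.+1) al d r j k * G k.+1 m%:R
   + \sum_(k < d.+1) al d r j k * (k%:R * (k%:R + 1)) * G k m%:R).
  rewrite mulr_sumr -big_split /=; apply: eq_bigr => k _; rewrite GS; ring.
rewrite big_ord_recr /= (G_vanish hm) mulr0 addr0.
rewrite [X in _ + X]big_ord_recl /=.
rewrite [RHS]big_ord_recl /= !al0 !G0 mul0r mulr0 mul0r add0r.
have -> : (bj d r j * 1 + aj d r j * 1 + cj d r j * 1) * 1 = 0 by rewrite /aj; ring.
rewrite add0r -big_split /=; apply: eq_bigr => k _.
have hb : bump 0 k = k.+1 by [].
rewrite hb -(key_L hr j (ltn_ord k)) -!natr1; ring.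
Qed.


Lemma ev1 a (p : {poly_d.+1 R}) x :
  ((a *: p : {poly_d.+1 R}) : {poly R}).[x] = a * (p : {poly R}).[x].
Proof. have -> : ((a *: p : {poly_d.+1 R}) : {poly R}) = a *: (p : {poly R}) by []. by rewrite hornerZ. Qed.

Lemma Lsu j : (j <= d)%N -> Ls (uv j) = j%:R *: uv j.
Proof.
move=> hj; apply: ext => i; rewrite HLs ev1 !uv_theta.
have hi : (i <= d)%N by rewrite -ltnS.
transitivity (\sum_(k < d.+1) al d r j k * (bs d r s i * G k (d - i.+1)%:R
   + as_ d r s i * G k (d - i)%:R + cs d r s i * G k (d - i.-1)%:R)).
  rewrite !mulr_sumr -!big_split /=; apply: eq_bigr => k _; ring.
rewrite big_ord_recl /= !G0.
have -> : bs d r s i * 1 + as_ d r s i * 1 + cs d r s i * 1 = 0 by rewrite /as_ /thetas; ring.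
rewrite mulr0 add0r.
have hb : forall k, bump 0 k = k.+1 by [].
under eq_bigr => k _ do rewrite hb (node_Ls hrs k hi).
set y := (d - i)%:R.
transitivity (\sum_(k < d) al d r j k.+1 * k.+1%:R * G k.+1 y
   + \sum_(k < d) al d r j k * (j%:R - k%:R) * G k y).
  rewrite -big_split /=; apply: eq_bigr => k _; rewrite alS.
  have := Dk_neq0 hr (ltn_ord k); move=> hD; field; exact: hD.
symmetry; rewrite mulr_sumr.
transitivity (\sum_(k < d.+1) (j%:R - k%:R) * al d r j k * G k y
   + \sum_(k < d.+1) k%:R * al d r j k * G k y).
  rewrite -big_split /=; apply: eq_bigr => k _; ring.
rewrite big_ord_recr /= [X in _ + X]big_ord_recl /= mul0r mul0r add0r.
have -> : (j%:R - d%:R) * al d r j d = 0.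
  have [jd|jd] : j = d \/ (j < d)%N by lia.
    by rewrite jd subrr mul0r.
  by rewrite al_zero // mulr0.
rewrite mul0r addr0 addrC; congr (_ + _); apply: eq_bigr => k _; rewrite ?hb; ring.
Qed.


Lemma bs_d0 : bs d r s d = 0.
Proof. by rewrite /bs ltnn. Qed.

Lemma csE' i : (i <= d)%N -> cs d r s i = Cf d r (d - i)%:R.
Proof.
move=> hi; case: i hi => [|i] hi; last by rewrite (csE hrs).
by rewrite /cs /= /Cf subn0 subrr !mul0r oppr0 mul0r.
Qed.

Lemma bs_neq0 i : (i < d)%N -> bs d r s i != 0.
Proof.
move=> hi; rewrite (bsE hrs hi) /Bf.
have y1 : 1 <= (d - i)%:R :> R by rewrite ler1n subn_gt0.
move: ((d - i)%:R) y1 => y y1.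
have := hr2; have := ler0n R d => h0 h2.
rewrite !mulf_neq0 ?invr_eq0 //; apply/negP => /eqP; lra.
Qed.

Lemma cs_neq0 i : (0 < i)%N -> (i <= d)%N -> cs d r s i != 0.
Proof.
move=> i0 hi; rewrite (csE hrs i0 hi) /Cf.
have iE : d%:R - (d - i)%:R = i%:R :> R by rewrite natrB // ; ring.
rewrite iE; have i1 : 1 <= i%:R :> R by rewrite ler1n.
have y0 := ler0n R (d - i).
move: ((d - i)%:R) y0 => y y0.
have := hr => h.
rewrite !mulf_neq0 ?invr_eq0 ?oppr_eq0 ?mulf_neq0 //; apply/negP => /eqP; lra.
Qed.

Lemma as_c i : (i < d)%N -> as_ d r s i + (r - d%:R) / 2 = 0.
Proof.
move=> hi; rewrite /as_ /thetas (bsE hrs hi) (csE' (ltnW hi)) /Bf /Cf.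
have y0 := ler0n R (d - i); move: ((d - i)%:R) y0 => y y0.
field; apply: lt0r_neq0; lra.
Qed.

Lemma lagv (k : nat) (j : 'I_d.+1) : (k <= d)%N ->
  (lag`_j : {poly R}).[theta d r s k] = (k == j)%:R.
Proof.
move=> hk; rewrite /lag nth_lagrange.
have hk' : (k < d.+1)%N by [].
rewrite -(xsE hk) -[in xs k](inordK hk') (lagrange_sample _ xs_inj) //.
by rewrite -val_eqE /= inordK // eq_sym.
Qed.

Lemma ev2 a (p q : {poly_d.+1 R}) x :
  ((p + a *: q : {poly_d.+1 R}) : {poly R}).[x] = (p : {poly R}).[x] + a * (q : {poly R}).[x].
Proof. have -> : ((p + a *: q : {poly_d.+1 R}) : {poly R}) = (p : {poly R}) + a *: (q : {poly R}) by []. by rewrite hornerD hornerZ. Qed.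

Definition cc : R := (r - d%:R) / 2.
Definition AA : 'End({poly_d.+1 R}) := Ls + cc *: \1%VF.

Lemma matL_lag (i j : 'I_d.+1) : mat_of lag L i j = theta d r s i * (i == j :> nat)%:R.
Proof. by rewrite /mat_of mxE lag_coord HL lagv // -ltnS. Qed.

Lemma matA_lag (i j : 'I_d.+1) : mat_of lag AA i j =
  bs d r s i * (lag`_j : {poly R}).[theta d r s i.+1] + (as_ d r s i + cc) * (i == j :> nat)%:R
  + cs d r s i * (lag`_j : {poly R}).[theta d r s i.-1].
Proof.
rewrite /mat_of mxE lag_coord /AA add_lfunE scale_lfunE id_lfunE ev2 HLs.
rewrite (@lagv i j (ltn_ord i)); ring.
Qed.


Lemma eqF (a b : nat) : a <> b -> (a == b) = false.
Proof. by move/eqP/negbTE. Qed.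

Lemma lag_L_diag : is_diagonal (mat_of lag L).
Proof.
move=> i j hij; rewrite matL_lag eqF ?mulr0 //.
by move/val_inj => e; rewrite e eqxx in hij.
Qed.

Lemma lag_term1 (i j : 'I_d.+1) : (i.+1 != j :> nat) ->
  bs d r s i * (lag`_j : {poly R}).[theta d r s i.+1] = 0.
Proof.
move=> h; have [hi|hi] : (i < d)%N \/ (i : nat) = d by have := ltn_ord i; lia.
  by rewrite (@lagv i.+1 j hi) (negPf h) mulr0.
by rewrite hi bs_d0 mul0r.
Qed.

Lemma lag_A_irr : irred_tridiag (mat_of lag AA).
Proof.
split.
- move=> i j H; rewrite matA_lag lag_term1; last by apply/eqP; lia.
  have hj : ((i : nat).-1 <= d)%N by have := ltn_ord i; lia.
  rewrite (@lagv _ j hj) !eqF ?mulr0 ?addr0 //; lia.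
- move=> i j H; split.
  + rewrite matA_lag.
    have hi : (i < d)%N by have := ltn_ord j; lia.
    have hj : ((i : nat).-1 <= d)%N by lia.
    rewrite (@lagv i.+1 j hi) (@lagv _ j hj) H eqxx !eqF ?mulr0 ?addr0; try lia.
    by rewrite mulr1 bs_neq0.
  + rewrite matA_lag lag_term1; last by apply/eqP; lia.
    have hj : ((j : nat).-1 <= d)%N by have := ltn_ord j; lia.
    rewrite (@lagv _ i hj) -H /= eqxx !eqF ?mulr0 ?add0r; try lia.
    rewrite mulr1 cs_neq0 //; have := ltn_ord j; lia.
Qed.

Lemma lag_A_diag0 (i : 'I_d.+1) : ((i : nat).+1 < d.+1)%N -> mat_of lag AA i i = 0.
Proof.
move=> hi; rewrite matA_lag lag_term1; last by apply/eqP; lia.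
have hj : ((i : nat).-1 <= d)%N by lia.
rewrite (@lagv _ i hj) eqxx mulr1 (as_c hi) add0r add0r.
case: (i : nat) hi hj => [|k] hi hj /=; first by rewrite /cs /= mul0r.
by rewrite eqF ?mulr0 //; lia.
Qed.


Definition u : (d.+1).-tuple {poly_d.+1 R} := [tuple uv i | i < d.+1].

Lemma nth_u k : (k < d.+1)%N -> u`_k = uv k.
Proof. by move=> hk; have := nth_mktuple (fun i : 'I_d.+1 => uv i) 0 (Ordinal hk). Qed.

Lemma nth_u_big k : (d.+1 <= k)%N -> u`_k = 0.
Proof. by move=> hk; rewrite nth_default // size_tuple. Qed.

Lemma Np_coef_big l k : (l < k)%N -> (Np l)`_k = 0.
Proof. by move=> hk; rewrite nth_default // size_Np. Qed.

Lemma Np_coef_lead k : (Np k)`_k = 1.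
Proof.
have := lead_coef_prod_XsubC (index_enum 'I_k) xpredT (fun l : 'I_k => (l%:R * (l%:R + 1) : R)).
by rewrite lead_coefE -/(Np k) size_Np.
Qed.

Lemma up_coef_lt j k : (j < k)%N -> (up j)`_k = 0.
Proof.
move=> hjk; rewrite /up coef_sum; apply: big1 => l _; rewrite coefZ.
case: (leqP l j) => hl.
  by rewrite Np_coef_big ?mulr0 //; exact: leq_ltn_trans hl hjk.
by rewrite al_zero // mul0r.
Qed.

Lemma up_coef_diag (k : 'I_d.+1) : (up k)`_k = al d r k k.
Proof.
rewrite /up coef_sum (bigD1 k) //= coefZ Np_coef_lead mulr1 big1 ?addr0 // => l hl.
rewrite coefZ; case: (ltngtP l k) => hlk.
- by rewrite Np_coef_big ?mulr0.
- by rewrite al_zero // mul0r.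
- by move/val_inj: hlk => e; rewrite e eqxx in hl.
Qed.

Lemma polyn_sum (F : 'I_d.+1 -> {poly_d.+1 R}) :
  ((\sum_i F i : {poly_d.+1 R}) : {poly R}) = \sum_i (F i : {poly R}).
Proof. exact: raddf_sum. Qed.

Lemma u_free : free u.
Proof.
apply/freeP => a H.
have Hk : forall k : 'I_d.+1, \sum_(i < d.+1) a i * (up i)`_k = 0.
  move=> k; have := congr1 (fun p : {poly_d.+1 R} => (p : {poly R})`_k) H.
  rewrite (@big_morph _ _ (fun p : {poly_d.+1 R} => (p : {poly R})`_k) 0 +%R 0 +%R).
  - move=> e; rewrite -[RHS](_ : ((0 : {poly_d.+1 R}) : {poly R})`_k = 0); last by rewrite raddf0 coef0.
    rewrite -e; apply: eq_bigr => i _.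
    by rewrite polynZ coefZ nth_u // uvE.
  - by move=> p q; apply: coefD.
  - by rewrite raddf0 coef0.
suff : forall m (i : 'I_d.+1), (d - i < m)%N -> a i = 0.
  by move=> h i; apply: (h d.+1); lia.
elim => [|m IH] i hi; first by lia.
have := Hk i; rewrite (bigD1 i) //= big1 ?addr0.
  move/eqP; rewrite up_coef_diag mulf_eq0 (negPf (al_diag hr (ltn_ord i : (i <= d)%N))) orbF.
  by move/eqP.
move=> l hl; case: (ltnP l i) => hli.
  by rewrite up_coef_lt ?mulr0.
rewrite IH ?mul0r //.
have : (i : nat) <> l by move=> e; move/eqP: hl; apply; apply: val_inj.
have := ltn_ord l; lia.
Qed.

Lemma u_basis : basis_of fullv u.
Proof. by rewrite basisEfree u_free subvf size_tuple dim_polyn /=. Qed.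

Lemma bj_d0 : bj d r d = 0.
Proof. by rewrite /bj subrr mulr0. Qed.

Lemma bj_neq0 i : (i < d)%N -> bj d r i != 0.
Proof.
move=> hi; rewrite /bj mulf_neq0 //.
  by apply: lt0r_neq0; have := ler0n R i; have := hr; lra.
by rewrite subr_eq0 eqr_nat neq_ltn hi.
Qed.

Lemma cj_neq0 j : (0 < j)%N -> (j <= d)%N -> cj d r j != 0.
Proof.
move=> j0 hj; rewrite /cj /cpj mulf_neq0 //; first by rewrite pnatr_eq0 -lt0n.
have : j%:R <= d%:R :> R by rewrite ler_nat.
have := hr2 => h1 h2; apply/negP => /eqP; lra.
Qed.

Lemma Lu' (j : 'I_d.+1) : L u`_j = bj d r j *: u`_j.+1 + aj d r j *: u`_j + cj d r j *: u`_j.-1.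
Proof.
have hj1 : ((j : nat).-1 < d.+1)%N by have := ltn_ord j; lia.
rewrite (nth_u (ltn_ord j)) (nth_u hj1) Lu; congr (_ + _ + _).
have [hj|hj] : (j < d)%N \/ (j : nat) = d by have := ltn_ord j; lia.
  by rewrite nth_u.
by rewrite hj nth_u_big // bj_d0 !scale0r.
Qed.

Lemma coord_u (k : nat) (i : 'I_d.+1) : coord u i u`_k = (k == i)%:R.
Proof.
case: (ltnP k d.+1) => hk.
  by rewrite -[k]/(nat_of_ord (Ordinal hk)) coord_free ?u_free // val_eqE.
by rewrite nth_u_big // linear0 eqF //; have := ltn_ord i; lia.
Qed.

Lemma matL_u (i j : 'I_d.+1) : mat_of u L i j =
  bj d r j * (j.+1 == i)%:R + aj d r j * (j == i :> nat)%:R + cj d r j * (j.-1 == i)%:R.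
Proof. by rewrite /mat_of mxE Lu' !linearD !linearZ /= !coord_u. Qed.

Lemma matA_u (i j : 'I_d.+1) : mat_of u AA i j = (j%:R + cc) * (j == i :> nat)%:R.
Proof.
rewrite /mat_of mxE /AA add_lfunE scale_lfunE id_lfunE (nth_u (ltn_ord j)) (Lsu (ltn_ord j)).
by rewrite -scalerDl -(nth_u (ltn_ord j)) linearZ /= coord_u.
Qed.


Lemma u_L_irr : irred_tridiag (mat_of u L).
Proof.
split.
- move=> i j H; rewrite matL_u !eqF ?mulr0 ?addr0 //; lia.
- move=> i j H; split.
  + rewrite matL_u -H /= eqxx !eqF ?mulr0 ?add0r; try lia.
    by rewrite mulr1 cj_neq0 // -ltnS H.
  + rewrite matL_u -H eqxx !eqF ?mulr0 ?addr0; try lia.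
    rewrite mulr1 bj_neq0 //; have := ltn_ord j; lia.
Qed.

Lemma u_A_diag : is_diagonal (mat_of u AA).
Proof.
move=> i j hij; rewrite matA_u eqF ?mulr0 //.
by move/val_inj => e; rewrite e eqxx in hij.
Qed.

Lemma main : dual_almost_bipartite L AA.
Proof.
split; first split.
- by rewrite dim_polyn.
- split.
  + exists d.+1, u; split; [exact: u_basis | split; [exact: u_A_diag | exact: u_L_irr]].
  + exists d.+1, lag; split; [exact: lag_full | split; [exact: lag_L_diag | exact: lag_A_irr]].
- exists d.+1, lag; split; first exact: lag_full.
  split; first exact: lag_L_diag.
  split; first exact: lag_A_irr.
  exact: lag_A_diag0.
Qed.

End Main.

Unset Implicit Arguments.

Theorem corollary4p1 (R : realFieldType) (d : nat) (r s : R)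
  (hr : -1 < r) (hs : -1 < s) (hr0 : r != 0) (hrs : r + s = 0)
  (L Ls : 'End({poly_d.+1 R}))
  (HL : forall (f : {poly_d.+1 R}) (i : 'I_d.+1),
      (L f : {poly R}).[theta d r s i] = theta d r s i * (f : {poly R}).[theta d r s i])
  (HLs : forall (f : {poly_d.+1 R}) (i : 'I_d.+1),
      (Ls f : {poly R}).[theta d r s i] =
        bs d r s i * (f : {poly R}).[theta d r s i.+1]
        + as_ d r s i * (f : {poly R}).[theta d r s i]
        + cs d r s i * (f : {poly R}).[theta d r s i.-1]) :
  dual_almost_bipartite L (Ls + ((r - d%:R) / 2) *: \1%VF).
Proof. exact: (main hr hs hrs HL HLs). Qed.
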